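(* Let $k$ be a positive integer and define $g_k(n)$ by $$\sum_{n=0}^{\infty} g_k(n)q^n=\frac{(-q;q)_\infty}{(q;q)_\infty}\,\phi(q^k),\qquad \phi(q)=\sum_{m=-\infty}^{\infty}q^{m^2}.$$ Then $g_k(n)$ equals the number of overpartitions of $n$ into parts such that no part is congruent to $0$ modulo $2k$ and parts congruent to $k \pmod{2k}$ have two colours.
   Context: For $|q|<1$, $(A;q)_\infty=\prod_{j\ge0}(1-Aq^j)$ and $(A_1,\dots,A_r;q)_\infty=\prod_i(A_i;q)_\infty$. An overpartition of $n$ is a partition of $n$ in which the first occurrence of each part may be overlined; its generating function is $(-q;q)_\infty/(q;q)_\infty$. ''Parts congruent to $k\pmod{2k}$ have two colours'' means each such part may appear in two distinguishable copies (colours), each copy being subject to the overpartition rule. *)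

(* Defs.v *)
From mathcomp Require Import all_boot all_algebra.
Set Implicit Arguments. Unset Strict Implicit. Unset Printing Implicit Defensive.
Import GRing.Theory.
Local Open Scope ring_scope.

(* Factors with j > n, geometric terms with i > n and theta terms with |m| > n
   only contribute to powers > n (for k >= 1), so coefficient n is exact. *)
Definition gen_trunc (k N : nat) : {poly int} :=
  (\prod_(1 <= j < N.+1) ((1 + 'X^j) * \sum_(i < N.+1) 'X^(j * i)))
  * \sum_(m < (2 * N).+1) 'X^(k * (absz (m%:Z - N%:Z)) ^ 2).

Definition g (k n : nat) : int := (gen_trunc k n)`_n.

(* ---------- Combinatorial side ----------
   A coloured part is a pair (s, c) with s the part size and c the colour
   (false = first colour, true = second colour). *)
Definition allowed_part (k s : nat) (c : bool) : bool :=
  [&& 0 < s, s %% (2 * k) != 0 & c ==> (s %% (2 * k) == k)]%N.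

(* An overpartition of n (with the colouring rule) is encoded by assigning to each
   coloured part (s, c) with s <= n its multiplicity m (< n+1) and a flag telling
   whether its first occurrence is overlined (possible only when m >= 1). *)
Definition col_overpartition (k n : nat)
    (f : {ffun 'I_n.+1 * bool -> 'I_n.+1 * bool}) : bool :=
  [forall x : 'I_n.+1 * bool, ((f x).1 == 0 :> nat) || allowed_part k x.1 x.2]
  && [forall x : 'I_n.+1 * bool, (f x).2 ==> (0 < (f x).1)%N]
  && ((\sum_(x : 'I_n.+1 * bool) (x.1 : nat) * (f x).1)%N == n).

Arguments col_overpartition : clear implicits.

Definition num_col_overpartitions (k n : nat) : nat :=
  #|[set f : {ffun 'I_n.+1 * bool -> 'I_n.+1 * bool} | col_overpartition k n f]|.

(* Main.v *)
Require Import Defs.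
From mathcomp Require Import all_boot all_algebra.
From mathcomp Require Import ring zify.
Set Implicit Arguments. Unset Strict Implicit. Unset Printing Implicit Defensive.
Import GRing.Theory.
Local Open Scope ring_scope.

Definition eqm (m : nat) (p q : {poly int}) := forall i, (i < m)%N -> p`_i = q`_i.

Lemma eqm_refl m p : eqm m p p. Proof. by []. Qed.
Lemma eqm_sym m p q : eqm m p q -> eqm m q p. Proof. by move=> h i /h ->. Qed.
Lemma eqm_trans m p q r : eqm m p q -> eqm m q r -> eqm m p r.
Proof. by move=> h1 h2 i hi; rewrite h1 // h2. Qed.
Lemma eqm_le m m' p q : (m' <= m)%N -> eqm m p q -> eqm m' p q.
Proof. by move=> hm h i hi; apply: h; apply: leq_trans hm. Qed.
Lemma eqmD m p q p' q' : eqm m p p' -> eqm m q q' -> eqm m (p + q) (p' + q').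
Proof. by move=> h1 h2 i hi; rewrite !coefD h1 // h2. Qed.
Lemma eqmN m p p' : eqm m p p' -> eqm m (- p) (- p').
Proof. by move=> h1 i hi; rewrite !coefN h1. Qed.
Lemma eqmB m p q p' q' : eqm m p p' -> eqm m q q' -> eqm m (p - q) (p' - q').
Proof. by move=> h1 h2; apply: eqmD => //; apply: eqmN. Qed.
Lemma eqmM m p q p' q' : eqm m p p' -> eqm m q q' -> eqm m (p * q) (p' * q').
Proof.
move=> h1 h2 i hi; rewrite !coefM; apply: eq_bigr => j _.
have hj : (j < m)%N by apply: leq_ltn_trans hi; rewrite -ltnS.
rewrite h1 // h2 //; apply: leq_ltn_trans hi; exact: leq_subr.
Qed.
Lemma eqm_prod m (I : Type) (r : seq I) (P : pred I) (F G : I -> {poly int}) :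
  (forall i, P i -> eqm m (F i) (G i)) ->
  eqm m (\prod_(i <- r | P i) F i) (\prod_(i <- r | P i) G i).
Proof.
move=> h; apply: (big_ind2 (eqm m)) => // x1 x2 y1 y2; exact: eqmM.
Qed.
Lemma eqm_prod1 m (I : Type) (r : seq I) (P : pred I) (F : I -> {poly int}) :
  (forall i, P i -> eqm m (F i) 1) -> eqm m (\prod_(i <- r | P i) F i) 1.
Proof.
move=> h; apply: eqm_trans (eqm_prod _ h) _; rewrite big1 //.
Qed.
Lemma eqm_Xn0 m e (p : {poly int}) : (m <= e)%N -> eqm m ('X^e * p) 0.
Proof.
move=> he i hi; rewrite coefXnM coef0 ifT //; exact: leq_trans hi he.
Qed.
Lemma eqm_shift m e (a b : {poly int}) : eqm m a b -> eqm (e + m) ('X^e * a) ('X^e * b).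
Proof.
move=> h i hi; rewrite !coefXnM; case: ifP => // /negbT; rewrite -leqNgt => hei.
apply: h; rewrite ltn_subLR // addnC //.
Qed.
Lemma eqm_1X m e (c : {poly int}) : (m <= e)%N -> eqm m (1 + c * 'X^e) 1.
Proof.
move=> he; rewrite -[X in eqm _ _ X]addr0; apply: eqmD => //.
by rewrite mulrC; apply: eqm_Xn0.
Qed.
Lemma eqm_cancel m (a b u : {poly int}) : u`_0 = 1 -> eqm m (a * u) (b * u) -> eqm m a b.
Proof.
move=> u0 h.
suff H : forall i, (i < m)%N -> forall j, (j <= i)%N -> a`_j = b`_j.
  by move=> i hi; apply: (H i hi).
elim=> [|i IH] hi j hj.
  move: hj; rewrite leqn0 => /eqP ->.
  by have := h 0%N hi; rewrite !coefM !big_ord1 u0 !mulr1.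
rewrite leq_eqVlt in hj; case/orP: hj => [/eqP ->|hj]; last first.
  by apply: IH => //; apply: ltnW.
have := h i.+1 hi; rewrite !coefM.
rewrite (big_ord_recr i.+1) [X in _ = X -> _](big_ord_recr i.+1) /= subnn u0 !mulr1.
under eq_bigr => j0 _ do rewrite (IH (ltnW hi) j0 (ltn_ord j0)).
by move/addrI.
Qed.

Section QB.
Variable t : {poly int}.
Fixpoint qb (n k : nat) {struct n} : {poly int} :=
  match n with
  | 0%N => if k is 0%N then 1 else 0
  | n'.+1 => if k is k'.+1 then qb n' k' + t ^+ k * qb n' k else 1
  end.

Lemma qbS n k : qb n.+1 k.+1 = qb n k + t ^+ k.+1 * qb n k.+1.
Proof. by []. Qed.
Lemma qb_n0 n : qb n 0 = 1.
Proof. by case: n. Qed.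
Lemma qb_gt n k : (n < k)%N -> qb n k = 0.
Proof.
elim: n k => [|n IH] [|k] //= hk.
by rewrite !IH ?mulr0 ?addr0 //; apply: ltnW.
Qed.
Lemma qb_nn n : qb n n = 1.
Proof. by elim: n => [|n IH] //=; rewrite IH qb_gt // mulr0 addr0. Qed.
Lemma qb_1 n : qb n.+1 1 = \sum_(i < n.+1) t ^+ i.
Proof.
elim: n => [|n IH]; first by rewrite /= big_ord1 mulr0 addr0.
rewrite qbS qb_n0 IH [RHS]big_ord_recl expr0; congr (_ + _).
rewrite mulr_sumr; apply: eq_bigr => i _; by rewrite -exprD lift0.
Qed.
Lemma qb_pascal2 n k : qb n.+1 k.+1 = t ^+ (n - k) * qb n k + qb n k.+1.
Proof.
elim: n k => [|n IH] k.
  case: k => [|k] /=; first by rewrite expr0 !mulr1 mulr0 !addr0.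
  by rewrite !mulr0 !addr0.
case: k => [|k].
  by rewrite qb_1 qb_n0 qb_1 subn0 mulr1 big_ord_recr /= addrC.
rewrite [LHS]qbS [in LHS](IH k) [in LHS](IH k.+1) [qb n.+1 k.+1]qbS [qb n.+1 k.+2]qbS.
case: (ltnP n k.+1) => hnk.
  rewrite (qb_gt hnk) (@qb_gt n k.+2) ?mulr0 ?addr0 //; last exact: ltnW.
  have -> : (n.+1 - k.+1 = n - k)%N by [].
  ring.
have -> : (n.+1 - k.+1 = n - k)%N by [].
have e2 : t ^+ (n - k) * t ^+ k.+1 = t ^+ k.+2 * t ^+ (n - k.+1).
  by rewrite -!exprD; congr (_ ^+ _); lia.
rewrite !mulrDr !mulrA e2; ring.
Qed.

Lemma qb_three n i :
  qb n.+2 i.+2 = t ^+ i.+2 * qb n i.+2 + (1 + t ^+ n.+1) * qb n i.+1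
                 + t ^+ (n - i) * qb n i.
Proof.
rewrite qbS qb_pascal2 qb_pascal2.
case: (ltnP n i.+1) => hni.
  rewrite (qb_gt hni) (@qb_gt n i.+2) ?mulr0; last exact: ltnW.
  ring.
have -> : t ^+ i.+2 * (t ^+ (n - i.+1) * qb n i.+1 + qb n i.+2)
  = t ^+ n.+1 * qb n i.+1 + t ^+ i.+2 * qb n i.+2.
  by rewrite mulrDr mulrA -exprD; congr (_ ^+ _ * _ + _); lia.
ring.
Qed.

Lemma qb_two1 n : qb n.+2 1 = t ^+ n.+1 + 1 + t * qb n 1.
Proof.
rewrite qb_pascal2 qb_n0 subn0 mulr1 qbS qb_n0; by rewrite addrA.
Qed.

Definition Pq (m : nat) := \prod_(i < m) (1 - t ^+ i.+1).
Lemma PqS m : Pq m.+1 = Pq m * (1 - t ^+ m.+1).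
Proof. by rewrite /Pq big_ord_recr. Qed.

Lemma qb_prod a b : qb (a + b) a * Pq a * Pq b = Pq (a + b).
Proof.
move: {2}(a + b)%N (erefl (a + b)%N) => n e.
elim: n a b e => [|n IH] a b e.
  have [-> ->] : (a = 0 /\ b = 0)%N by lia.
  by rewrite /= /Pq !big_ord0 !mulr1.
case: a e => [|a] e.
  by rewrite add0n qb_n0 /Pq big_ord0 !mul1r.
case: b e => [|b] e.
  by rewrite addn0 qb_nn /Pq big_ord0 mulr1 mul1r.
have h1 := IH a b.+1 ltac:(lia).
have h2 := IH a.+1 b ltac:(lia).
have ec : (a.+1 + b = a + b.+1)%N by lia.
rewrite ec in h2.
have -> : (a.+1 + b.+1 = (a + b.+1).+1)%N by lia.
set c := (a + b.+1)%N in h1 h2 *.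
have -> : qb c.+1 a.+1 * Pq a.+1 * Pq b.+1 =
   (1 - t ^+ a.+1) * (qb c a * Pq a * Pq b.+1)
   + t ^+ a.+1 * (1 - t ^+ b.+1) * (qb c a.+1 * Pq a.+1 * Pq b).
  rewrite qbS [Pq a.+1]PqS [Pq b.+1]PqS; ring.
rewrite h1 h2 PqS.
have -> : t ^+ c.+1 = t ^+ a.+1 * t ^+ b.+1 by rewrite -exprD; congr (_ ^+ _); rewrite /c; lia.
ring.
Qed.
End QB.

Definition dd (i N : nat) := ((i - N) + (N - i))%N.

Section JTP.
Variable y : {poly int}.
Definition rr (N i : nat) := y ^+ (dd i N * dd i N) * qb (y ^+ 2) (2 * N) i.

Lemma rr_zero N i : (2 * N < i)%N -> rr N i = 0.
Proof. by move=> h; rewrite /rr qb_gt // mulr0. Qed.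

Lemma rr_rec0 N : rr N.+1 0 = y ^+ (2 * N + 1) * rr N 0.
Proof.
rewrite /rr !qb_n0 !mulr1 -exprD; congr (_ ^+ _); rewrite /dd; nia.
Qed.

Lemma rr_rec1 N : rr N.+1 1 = y ^+ (2 * N + 1) * rr N 1 + (1 + y ^+ (4 * N + 2)) * rr N 0.
Proof.
rewrite /rr qb_n0 mulr1.
have -> : (2 * N.+1 = (2 * N).+2)%N by lia.
rewrite qb_two1.
case: N => [|N].
  rewrite /= !mulr0 !addr0 /dd /= -exprM; ring.
rewrite -!exprM.
have -> : (dd 1 N.+2 * dd 1 N.+2 = dd 0 N.+1 * dd 0 N.+1)%N by rewrite /dd; lia.
have -> : y ^+ (2 * N.+1 + 1) * (y ^+ (dd 1 N.+1 * dd 1 N.+1) * qb (y ^+ 2) (2 * N.+1) 1)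
   = y ^+ (dd 0 N.+1 * dd 0 N.+1 + 2) * qb (y ^+ 2) (2 * N.+1) 1.
  rewrite mulrA -exprD; congr (_ ^+ _ * _); rewrite /dd; nia.
have -> : (2 * (2 * N.+1).+1 = 4 * N.+1 + 2)%N by lia.
rewrite (exprD y (dd 0 N.+1 * dd 0 N.+1) 2); ring.
Qed.

Lemma rr_rec2 N i : rr N.+1 i.+2 =
  y ^+ (2 * N + 1) * rr N i.+2 + (1 + y ^+ (4 * N + 2)) * rr N i.+1
  + y ^+ (2 * N + 1) * rr N i.
Proof.
rewrite /rr.
have -> : (2 * N.+1 = (2 * N).+2)%N by lia.
rewrite qb_three -!exprM.
have -> : (dd i.+1 N * dd i.+1 N = dd i.+2 N.+1 * dd i.+2 N.+1)%N by rewrite /dd; lia.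
have -> : y ^+ (2 * N + 1) * (y ^+ (dd i.+2 N * dd i.+2 N) * qb (y ^+ 2) (2 * N) i.+2)
  = y ^+ (dd i.+2 N.+1 * dd i.+2 N.+1 + 2 * i.+2) * qb (y ^+ 2) (2 * N) i.+2.
  rewrite mulrA -exprD; congr (_ ^+ _ * _); rewrite /dd; nia.
case: (ltnP (2 * N) i) => hi.
  rewrite (qb_gt _ hi) !mulr0 addr0.
  have -> : (2 * (2 * N).+1 = 4 * N + 2)%N by lia.
  rewrite !(exprD y (dd i.+2 N.+1 * dd i.+2 N.+1)); ring.
have -> : y ^+ (2 * N + 1) * (y ^+ (dd i N * dd i N) * qb (y ^+ 2) (2 * N) i)
  = y ^+ (dd i.+2 N.+1 * dd i.+2 N.+1 + 2 * (2 * N - i)) * qb (y ^+ 2) (2 * N) i.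
  rewrite mulrA -exprD; congr (_ ^+ _ * _); rewrite /dd; nia.
have -> : (2 * (2 * N).+1 = 4 * N + 2)%N by lia.
rewrite !(exprD y (dd i.+2 N.+1 * dd i.+2 N.+1)); ring.
Qed.

Definition SS N := \sum_(0 <= i < (2 * N).+1) rr N i.

Lemma SS_shift1 N : \sum_(0 <= i < (2 * N).+1) rr N i.+1 = SS N - rr N 0.
Proof.
have h : \sum_(0 <= i < (2 * N).+2) rr N i = SS N.
  by rewrite big_nat_recr //= rr_zero ?addr0.
rewrite -h [in RHS]big_nat_recl //; by rewrite [rr N 0 + _]addrC addrK.
Qed.

Lemma SS_shift2 N : \sum_(0 <= i < (2 * N).+1) rr N i.+2 = SS N - rr N 0 - rr N 1.
Proof.
have h : \sum_(0 <= i < (2 * N).+3) rr N i = SS N.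
  by rewrite big_nat_recr //= rr_zero ?addr0 // -/(SS_shift1 N) big_nat_recr //= rr_zero ?addr0 //.
rewrite -h [in RHS]big_nat_recl // [in RHS]big_nat_recl //.
ring.
Qed.

Lemma SS_prod N : SS N = \prod_(i < N) (1 + y ^+ (2 * i + 1)) ^+ 2.
Proof.
elim: N => [|N IH].
  by rewrite /SS big_nat1 big_ord0 /rr /dd /= mulr1.
rewrite big_ord_recr /= -IH /SS.
have -> : ((2 * N.+1).+1 = (2 * N + 1).+2)%N by lia.
rewrite big_nat_recl // big_nat_recl //.
under eq_bigr => i _ do rewrite rr_rec2.
rewrite !big_split /= -!mulr_sumr [(2 * N + 1)%N]addn1 SS_shift1 SS_shift2 rr_rec0 rr_rec1 -/(SS N).
have -> : y ^+ (4 * N + 2) = y ^+ (2 * N + 1) * y ^+ (2 * N + 1).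
  by rewrite -exprD; congr (_ ^+ _); lia.
rewrite !addn1; set e := (2 * N).+1; ring.
Qed.
End JTP.

Lemma eqm_sum m (I : Type) (r : seq I) (P : pred I) (F G : I -> {poly int}) :
  (forall i, P i -> eqm m (F i) (G i)) ->
  eqm m (\sum_(i <- r | P i) F i) (\sum_(i <- r | P i) G i).
Proof.
move=> h; apply: (big_ind2 (eqm m)) => // x1 x2 y1 y2; exact: eqmD.
Qed.

Section JC.
Variable k : nat.
Hypothesis kpos : (0 < k)%N.
Let y : {poly int} := 'X^k.
Let t : {poly int} := y ^+ 2.

Lemma tX j : t ^+ j = 'X^(2 * k * j).
Proof. rewrite /t /y -!exprM; congr (_ ^+ _); lia. Qed.

Lemma Pq_coef0 m : (Pq t m)`_0 = 1.
Proof.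
rewrite -horner_coef0 /Pq horner_prod; apply: big1 => i _.
rewrite tX hornerD hornerN hornerC hornerXn expr0n /=.
have -> : (2 * k * i.+1 == 0)%N = false by apply/negbTE; rewrite !muln_eq0 negb_or /= -lt0n kpos.
by rewrite subr0.
Qed.

Lemma Pq_trunc L M : (L <= M)%N -> eqm (2 * k * L.+1) (Pq t M) (Pq t L).
Proof.
move=> hLM; rewrite /Pq -(subnKC hLM) big_split_ord /=.
rewrite -[X in eqm _ _ X]mulr1; apply: eqmM => //.
apply: eqm_prod1 => i _; rewrite /= tX.
rewrite -[X in eqm _ _ X]addr0; apply: eqmD => //.
rewrite -mulN1r -[X in eqm _ _ X](mulr0 (-1)); apply: eqmM => //.
rewrite -[X in eqm _ X _]mulr1; apply: eqm_Xn0.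
by rewrite leq_mul2l; apply/orP; right; rewrite ltnS leq_addr.
Qed.
Lemma qbP N i M : (i <= 2 * N)%N -> (minn i (2 * N - i) <= M)%N ->
  eqm (2 * k * (minn i (2 * N - i)).+1) (qb t (2 * N) i * Pq t M) 1.
Proof.
move=> hi hM; set L := minn i (2 * N - i).
have hLi : (L <= i)%N by rewrite geq_minl.
have hLj : (L <= 2 * N - i)%N by rewrite geq_minr.
have hLN : (L <= 2 * N)%N by apply: leq_trans hLi hi.
have e := qb_prod t i (2 * N - i); rewrite (subnKC hi) in e.
have h1 : eqm (2 * k * L.+1) (qb t (2 * N) i * Pq t L * Pq t L) (1 * Pq t L).
  rewrite mul1r; apply: eqm_trans (Pq_trunc hLN); rewrite -e.
  apply: eqmM; first apply: eqmM => //; by apply: eqm_sym; apply: Pq_trunc.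
have h2 := eqm_cancel (Pq_coef0 L) h1.
apply: eqm_trans h2; apply: eqmM => //; exact: Pq_trunc.
Qed.

Lemma rrP N i M : (i <= 2 * N)%N -> (N <= M)%N ->
  eqm (k * N.+1) (rr y N i * Pq t M) ('X^(k * (dd i N * dd i N))).
Proof.
move=> hi hM.
have hL : (minn i (2 * N - i) <= M)%N by lia.
have h := eqm_shift (e := (k * (dd i N * dd i N))%N) (qbP hi hL).
rewrite mulr1 in h.
have -> : rr y N i * Pq t M = 'X^(k * (dd i N * dd i N)) * (qb t (2 * N) i * Pq t M).
  by rewrite /rr /y -exprM -mulrA.
apply: (eqm_le _ h).
have hh : (N.+1 <= dd i N * dd i N + 2 * (minn i (2 * N - i)).+1)%N by rewrite /dd; nia.
have := leq_mul (leqnn k) hh; rewrite mulnDr; lia.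
Qed.
Lemma JTP N M : (N <= M)%N ->
  eqm (k * N.+1) ((\prod_(i < N) (1 + y ^+ (2 * i + 1)) ^+ 2) * Pq t M)
      (\sum_(0 <= i < (2 * N).+1) 'X^(k * (dd i N * dd i N))).
Proof.
move=> hM; rewrite -SS_prod /SS mulr_suml !big_seq; apply: eqm_sum => i.
rewrite mem_index_iota => /andP[_ hi]; apply: rrP => //.
Qed.
End JC.

Section Comb.
Variables k n : nat.

Definition Gs (s : nat) : {poly int} := \sum_(i < n.+1) 'X^(s * i).
Definition Es (s : nat) : {poly int} := Gs s *+ 2 - 1.

Definition valid (x y : 'I_n.+1 * bool) : bool :=
  (((y.1 : nat) == 0%N) || allowed_part k x.1 x.2) && (y.2 ==> (0 < y.1)%N).
Definition ww (x y : 'I_n.+1 * bool) : {poly int} :=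
  if valid x y then 'X^(x.1 * y.1) else 0.

Lemma count_coef :
  (num_col_overpartitions k n)%:Z =
  (\prod_(x : 'I_n.+1 * bool) \sum_(y : 'I_n.+1 * bool) ww x y)`_n.
Proof.
rewrite bigA_distr_bigA coef_sum.
rewrite (eq_bigr (fun f => (col_overpartition k n f)%:R)); last first.
  move=> f _; rewrite /col_overpartition.
  case: (boolP [forall x, valid x (f x)]) => hv.
    rewrite (eq_bigr (fun x : 'I_n.+1 * bool => 'X^(x.1 * (f x).1))); last first.
      by move=> x _; rewrite /ww (forallP hv x).
    rewrite prodrXr coefXn.
    have -> : [forall x, ((f x).1 == 0 :> nat) || allowed_part k x.1 x.2] = true.
      by apply/forallP => x; have /andP[] := forallP hv x.
    have -> : [forall x, (f x).2 ==> (0 < (f x).1)%N] = true.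
      by apply/forallP => x; have /andP[] := forallP hv x.
    by rewrite /= eq_sym.
  have [x hx] : exists x, ~~ valid x (f x).
    by apply/existsP; rewrite -negb_forall.
  rewrite (bigD1 x) //= /ww (negbTE hx) mul0r coef0.
  move: hx; rewrite /valid negb_and => /orP[] h.
    suff -> : [forall x, ((f x).1 == 0 :> nat) || allowed_part k x.1 x.2] = false by [].
    by apply/negbTE; rewrite negb_forall; apply/existsP; exists x.
  suff -> : [forall x, (f x).2 ==> (0 < (f x).1)%N] = false by rewrite andbF.
  by apply/negbTE; rewrite negb_forall; apply/existsP; exists x.
rewrite (eq_bigr (fun f => if col_overpartition k n f then 1 else 0)); last first.
  by move=> f _; case: (col_overpartition k n f).
rewrite -big_mkcond /= sumr_const /num_col_overpartitions cardsE.
by rewrite -natz.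
Qed.
Lemma factor_eq (x : 'I_n.+1 * bool) :
  \sum_(y : 'I_n.+1 * bool) ww x y = if allowed_part k x.1 x.2 then Es x.1 else 1.
Proof.
have -> : \sum_(y : 'I_n.+1 * bool) ww x y =
   \sum_(y : 'I_n.+1 * bool) (fun (a : 'I_n.+1) (b : bool) => ww x (a, b)) y.1 y.2.
  by apply: eq_bigr => -[a b].
rewrite -(pair_bigA _ (fun (a : 'I_n.+1) (b : bool) => ww x (a, b))) /=.
under eq_bigr => a _ do rewrite big_bool.
rewrite big_split /=.
case: x => s c /=.
case: (boolP (allowed_part k s c)) => ha.
  rewrite /ww /valid /= ha.
  under eq_bigr => i _ do rewrite orbT /=.
  under [X in _ + X]eq_bigr => i _ do rewrite orbT /=.
  rewrite /Es /Gs [X in X + _]big_ord_recl /=.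
  rewrite [\sum_(i < n.+1) _]big_ord_recl /= muln0 expr0.
  rewrite mulr2n; ring.
rewrite /ww /valid /= (negbTE ha).
under eq_bigr => i _ do rewrite orbF.
under [X in _ + X]eq_bigr => i _ do rewrite orbF andbT.
rewrite [X in X + _]big_ord_recl [X in _ + X]big_ord_recl /= muln0 expr0.
rewrite !big1 ?addr0 ?add0r //.
Qed.
Definition ab (s : nat) : {poly int} :=
  (if allowed_part k s false then Es s else 1) * (if allowed_part k s true then Es s else 1).

Lemma count_prod :
  (num_col_overpartitions k n)%:Z = (\prod_(0 <= s < n.+1) ab s)`_n.
Proof.
rewrite count_coef.
rewrite (eq_bigr (fun x : 'I_n.+1 * bool =>
   (fun (a : 'I_n.+1) (b : bool) => if allowed_part k a b then Es a else 1) x.1 x.2)); last first.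
  by move=> x _; rewrite factor_eq.
rewrite -(pair_bigA _ (fun (a : 'I_n.+1) (b : bool) => if allowed_part k a b then Es a else 1)) /=.
rewrite big_mkord (eq_bigr (fun i : 'I_n.+1 => ab i)) //.
by move=> a _; rewrite big_bool /ab mulrC.
Qed.
End Comb.

Lemma geom (x : {poly int}) N : (1 - x) * \sum_(i < N) x ^+ i = 1 - x ^+ N.
Proof.
elim: N => [|N IH]; first by rewrite big_ord0 mulr0 expr0 subrr.
rewrite big_ord_recr /= mulrDr IH exprS; ring.
Qed.

Lemma eqm_X0 m e : (m <= e)%N -> eqm m 'X^e 0.
Proof. move=> h; rewrite -['X^e]mulr1; exact: eqm_Xn0. Qed.

Lemma eqm_1pX m e : (m <= e)%N -> eqm m (1 + 'X^e) 1.
Proof. move=> h; rewrite -[X in eqm _ _ X]addr0; apply: eqmD => //; exact: eqm_X0. Qed.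
Lemma eqm_1mX m e : (m <= e)%N -> eqm m (1 - 'X^e) 1.
Proof.
move=> h; rewrite -[X in eqm _ _ X]subr0; apply: eqmB => //; exact: eqm_X0.
Qed.
Lemma eqm_mul1 m p q : eqm m p 1 -> eqm m q 1 -> eqm m (p * q) 1.
Proof. move=> h1 h2; rewrite -(mulr1 1); exact: eqmM. Qed.

Lemma trunc_prod m (f : nat -> {poly int}) A B : (A <= B)%N ->
  (forall i, (A <= i < B)%N -> eqm m (f i) 1) ->
  eqm m (\prod_(0 <= i < A) f i) (\prod_(0 <= i < B) f i).
Proof.
move=> hAB h; rewrite (big_cat_nat (leq0n A) hAB) /=.
rewrite -[X in eqm _ X _]mulr1; apply: eqmM => //.
apply: eqm_sym; rewrite big_seq; apply: eqm_prod1 => i; rewrite mem_index_iota; exact: h.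
Qed.

Lemma block_prod (f : nat -> {poly int}) b M :
  \prod_(0 <= s < b * M) f s = \prod_(0 <= i < M) \prod_(0 <= r < b) f (i * b + r)%N.
Proof.
elim: M => [|M IH]; first by rewrite muln0 !big_geq.
rewrite big_nat_recr //= -IH mulnS addnC.
rewrite (big_cat_nat (leq0n (b * M)) (leq_addr b (b * M))) /=; congr (_ * _).
rewrite (big_addn 0 (b * M + b) (b * M)) addKn.
by apply: eq_bigr => i _; rewrite addnC mulnC.
Qed.

Lemma prod_coef0 (I : Type) (r : seq I) (P : pred I) (F : I -> {poly int}) :
  (forall i, P i -> (F i)`_0 = 1) -> (\prod_(i <- r | P i) F i)`_0 = 1.
Proof.
move=> h; rewrite -horner_coef0 horner_prod; apply: big1 => i /h.
by rewrite horner_coef0.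
Qed.
Lemma coef0_1mX e : (0 < e)%N -> (1 - 'X^e : {poly int})`_0 = 1.
Proof. move=> he; rewrite coefB coef1 coefXn /=; have -> : (0 == e)%N = false by case: e he. by rewrite subr0. Qed.

Section Main.
Variables k n : nat.
Hypothesis kpos : (0 < k)%N.

Lemma Gs_geom s : (1 - 'X^s) * Gs n s = 1 - 'X^(s * n.+1).
Proof.
rewrite /Gs (eq_bigr (fun i : 'I_n.+1 => ('X^s) ^+ i)); last by move=> i _; rewrite exprM.
by rewrite geom -exprM.
Qed.

End Main.

Lemma t1 (G Y Z : {poly int}) (h : (1 - Z) * G = 1 - Y) : (G *+ 2 - 1) * (1 - Z) = (1 + Z) - Y *+ 2.
Proof.
  have -> : (G *+ 2 - 1) * (1 - Z) = ((1 - Z) * G) *+ 2 - (1 - Z) by rewrite !mulr2n; ring.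
  by rewrite h !mulr2n; ring.
Qed.
Lemma t2 n s : (0 < s)%N -> eqm n.+1 ((1 + 'X^s) - 'X^(s * n.+1) *+ 2) (1 + 'X^s).
Proof.
move=> hs.
rewrite -[X in eqm _ _ X]subr0; apply: eqmB => //.
move=> i hi; rewrite coefMn coefXn coef0.
have hh : (n.+1 <= s * n.+1)%N by rewrite leq_pmull.
have -> : (i == s * n.+1)%N = false by apply/negbTE; rewrite neq_ltn (leq_trans hi hh).
by rewrite mul0rn.
Qed.

Section Main2.
Variables k n : nat.
Hypothesis kpos : (0 < k)%N.

Lemma Ep_eq j : (1 + 'X^j) * Gs n j = Es n j + 'X^(j * n.+1).
Proof.
have h := Gs_geom n j.
rewrite /Es; move: h; set G := Gs n j; set Y := 'X^(j * n.+1); set Z := 'X^j => h; clearbody G Y Z.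
have -> : (1 + Z) * G = G *+ 2 - (1 - Z) * G by rewrite mulr2n; ring.
by rewrite h; ring.
Qed.
Lemma Es_mul s : (0 < s)%N -> eqm n.+1 (Es n s * (1 - 'X^s)) (1 + 'X^s).
Proof.
move=> hs; rewrite /Es (t1 (Gs_geom n s)); exact: t2.
Qed.

End Main2.

Lemma Gs_big n s : (n.+1 <= s)%N -> eqm n.+1 (Gs n s) 1.
Proof.
move=> hs i hi; rewrite /Gs coef_sum coef1.
rewrite big_ord_recl muln0 coefXn big1 ?addr0 //.
move=> j _; rewrite coefXn.
have hh : (s <= s * (lift ord0 j))%N by rewrite leq_pmulr.
have -> : (i == s * lift ord0 j)%N = false.
  by apply/negbTE; rewrite neq_ltn (leq_trans hi (leq_trans hs hh)).
by [].
Qed.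
Lemma Es_big n s : (n.+1 <= s)%N -> eqm n.+1 (Es n s) 1.
Proof.
move=> hs i hi; rewrite /Es coefB coefMn (Gs_big hs hi) mulr2n addrK //.
Qed.

Section M7.
Variables k n : nat.
Hypothesis kpos : (0 < k)%N.

Lemma ikpos i : (0 < i)%N -> (0 < i * k)%N.
Proof. by move=> hi; rewrite muln_gt0 hi kpos. Qed.

Lemma big_exp i : (n.+1 <= i)%N -> (n.+1 <= i * k)%N.
Proof. by move=> h; apply: leq_trans h _; rewrite leq_pmulr. Qed.

Definition Ev (i : nat) : {poly int} :=
  if (0 < i)%N && ~~ odd i then 1 - 'X^(i * k) else 1.
Definition Od (i : nat) : {poly int} := if odd i then 1 - 'X^(i * k) else 1.
Definition Pos (i : nat) : {poly int} := if (0 < i)%N then 1 - 'X^(i * k) else 1.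
Definition Aa (j : nat) : {poly int} := if (0 < j)%N then 1 - 'X^((j * 2) * k) else 1.
Definition w1 (i : nat) : {poly int} :=
  (if (0 < i)%N then 1 + 'X^(i * k) else 1) * Od i.

Lemma Pos_coef0 i : (Pos i)`_0 = 1.
Proof. rewrite /Pos; case: ifP => h //; first by rewrite coef0_1mX // ikpos. by rewrite coef1. Qed.
Lemma Od_coef0 i : (Od i)`_0 = 1.
Proof.
rewrite /Od; case: ifP => h; last by rewrite coef1.
by rewrite coef0_1mX // ikpos //; case: i h.
Qed.

Lemma Pos_split i : Pos i = Od i * Ev i.
Proof.
rewrite /Pos /Od /Ev; case: i => [|i] //=; first by rewrite mulr1.
by case: (odd i) => /=; rewrite ?mulr1 ?mul1r.
Qed.

Lemma w1_Pos i : w1 i * Pos i = Aa i * Od i.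
Proof.
rewrite /w1 /Pos /Aa; case: ifP => h; last by rewrite !mul1r mulr1.
have -> : 'X^((i * 2) * k) = ('X^(i * k) : {poly int}) ^+ 2.
  by rewrite -exprM; congr (_ ^+ _); rewrite mulnAC.
move: ('X^(i * k) : {poly int}) (Od i) => x o; ring.
Qed.

Lemma Ev_trunc : eqm n.+1 (\prod_(0 <= i < n.+1) Ev i) (\prod_(0 <= j < n.+1) Aa j).
Proof.
apply: eqm_trans (trunc_prod (B := (2 * n.+1)%N) _ _) _.
- by rewrite leq_pmull.
- move=> i /andP[hi _]; rewrite /Ev; case: ifP => _ //; apply: eqm_1mX; exact: big_exp.
rewrite block_prod; apply: eqm_prod => j _.
rewrite big_nat_recr //= big_nat1 addn0 addn1 /Ev /Aa oddM /= andbF andbT.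
rewrite negbK oddM andbF muln_gt0 andbT mulr1; by apply: eqm_refl.
Qed.

Lemma Euler : eqm n.+1 (\prod_(0 <= i < n.+1) w1 i) 1.
Proof.
apply: (@eqm_cancel _ _ _ (\prod_(0 <= i < n.+1) Pos i)).
  by apply: prod_coef0 => i _; apply: Pos_coef0.
rewrite -big_split /= mul1r.
rewrite (eq_bigr (fun i => Aa i * Od i)); last by move=> i _; apply: w1_Pos.
rewrite (eq_bigr (fun i => Od i * Ev i) (fun i _ => Pos_split i)) !big_split /= mulrC.
apply: eqmM => //; apply: eqm_sym; exact: Ev_trunc.
Qed.

Lemma ab_nonmult s : (s %% k != 0)%N -> ab k n s = Es n s.
Proof.
move=> hs.
have hmod : ((s %% (2 * k)) %% k = s %% k)%N by rewrite -(modn_dvdm s (dvdn_mull 2 (dvdnn k))).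
have h0 : (s %% (2 * k) != 0)%N.
  by apply/negP => /eqP h; move: hmod; rewrite h mod0n => e; move: hs; rewrite -e.
have h1 : (s %% (2 * k) != k)%N.
  by apply/negP => /eqP h; move: hmod; rewrite h modnn => e; move: hs; rewrite -e.
have spos : (0 < s)%N by rewrite lt0n; apply/negP => /eqP e; move: hs; rewrite e mod0n.
by rewrite /ab /allowed_part spos h0 (negbTE h1) /= mulr1.
Qed.

Lemma ab_mult i : ab k n (i * k) = if odd i then Es n (i * k) ^+ 2 else 1.
Proof.
have hm : ((i * k) %% (2 * k) = odd i * k)%N by rewrite -muln_modl modn2.
rewrite /ab /allowed_part hm.
case: (boolP (odd i)) => ho /=.
  have ip : (0 < i)%N by rewrite lt0n; apply/negP => /eqP e; move: ho; rewrite e.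
  rewrite mul1n ikpos // eqxx -lt0n kpos /= expr2 //.
by rewrite andbF mulr1.
Qed.
Definition h0 (i : nat) : {poly int} :=
  if odd i then (1 + 'X^(i * k)) ^+ 2 else if (0 < i)%N then 1 - 'X^(i * k) else 1.
Definition Th : {poly int} := \sum_(0 <= i < (2 * n).+1) 'X^(k * (dd i n * dd i n)).

Lemma h0_prod : \prod_(0 <= i < (2 * n).+1) h0 i =
  (\prod_(i < n) (1 + 'X^k ^+ (2 * i + 1)) ^+ 2) * Pq ('X^k ^+ 2) n.
Proof.
rewrite big_nat_recl // {1}/h0 /= mul1r block_prod big_mkord /Pq -big_split /=.
apply: eq_bigr => j _.
rewrite big_nat_recr //= big_nat1 addn0 addn1 /h0 /= oddM andbF /=.
rewrite -!exprM; congr ((1 + 'X^_) ^+ 2 * (1 - 'X^_)); lia.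
Qed.

Lemma ThJ : eqm n.+1 Th (\prod_(0 <= i < n.+1) h0 i).
Proof.
have J := JTP kpos (leqnn n).
apply: eqm_sym; apply: eqm_trans (trunc_prod (B := (2 * n).+1) _ _) _.
- by rewrite ltnS leq_pmull.
- move=> i /andP[hi _]; rewrite /h0.
  have hb := big_exp hi.
  case: ifP => _; first by rewrite expr2; apply: eqm_mul1; apply: eqm_1pX.
  case: ifP => _ //; exact: eqm_1mX.
rewrite h0_prod; apply: eqm_sym; apply: (eqm_le _ (eqm_sym J)).
by rewrite leq_pmull.
Qed.
Definition ue (i : nat) : {poly int} := if (0 < i)%N then Es n (i * k) else 1.
Definition uo (i : nat) : {poly int} := if odd i then Es n (i * k) ^+ 2 else 1.

Lemma v_coef0 i : (Pos i * Od i)`_0 = 1.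
Proof. by rewrite -horner_coef0 hornerM !horner_coef0 Pos_coef0 Od_coef0 mulr1. Qed.

Lemma ue_v i : eqm n.+1 (ue i * (Pos i * Od i)) (w1 i).
Proof.
rewrite /ue /Pos /w1; case: ifP => h; last by rewrite !mul1r.
rewrite mulrA; apply: eqmM => //; apply: Es_mul; exact: ikpos.
Qed.

Lemma uo_v i : eqm n.+1 (uo i * (Pos i * Od i)) (h0 i).
Proof.
rewrite /uo /Pos /Od /h0; case: (boolP (odd i)) => ho.
  have ip : (0 < i)%N by rewrite lt0n; apply/negP => /eqP e; move: ho; rewrite e.
  rewrite ip.
  have -> : Es n (i * k) ^+ 2 * ((1 - 'X^(i * k)) * (1 - 'X^(i * k))) =
     (Es n (i * k) * (1 - 'X^(i * k))) * (Es n (i * k) * (1 - 'X^(i * k))).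
    by move: (Es n (i * k)) ('X^(i * k) : {poly int}) => a b; ring.
  rewrite expr2; apply: eqmM; apply: Es_mul; exact: ikpos.
by rewrite !mul1r mulr1.
Qed.

Lemma Core : eqm n.+1 ((\prod_(0 <= i < n.+1) ue i) * Th) (\prod_(0 <= i < n.+1) uo i).
Proof.
apply: (@eqm_cancel _ _ _ (\prod_(0 <= i < n.+1) (Pos i * Od i))).
  by apply: prod_coef0 => i _; apply: v_coef0.
rewrite mulrAC -!big_split /= mulrC.
have E1 : eqm n.+1 (\prod_(0 <= i < n.+1) (ue i * (Pos i * Od i))) (\prod_(0 <= i < n.+1) w1 i).
  by apply: eqm_prod => i _; exact: ue_v.
apply: eqm_trans (eqmM (@eqm_refl _ Th) E1) _.
apply: eqm_trans (eqmM (@eqm_refl _ Th) Euler) _.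
rewrite mulr1; apply: eqm_trans ThJ _.
apply: eqm_sym; apply: eqm_prod => i _; exact: uo_v.
Qed.
End M7.

Lemma absz_dd (a b : nat) : (absz (a%:Z - b%:Z) ^ 2 = dd a b * dd a b)%N.
Proof.
rewrite -mulnn /dd; case: (leqP a b) => h.
  rewrite distnEr //; congr (_ * _)%N; lia.
rewrite distnEl ?(ltnW h) //; congr (_ * _)%N; lia.
Qed.

Lemma inner_split (f : nat -> {poly int}) c b :
  \prod_(0 <= r < b.+1) f (c + r)%N = f c * \prod_(0 <= r < b) f (c + r.+1)%N.
Proof. by rewrite big_nat_recl // addn0. Qed.

Lemma gen_trunc_eq k n : gen_trunc k n =
  (\prod_(1 <= j < n.+1) ((1 + 'X^j) * Gs n j)) * Th k n.
Proof.
rewrite /gen_trunc /Th /Gs; congr (_ * _).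
rewrite big_mkord; apply: eq_bigr => i _; by rewrite absz_dd.
Qed.

Definition FF n (s : nat) : {poly int} := if (0 < s)%N then Es n s else 1.

Lemma step1 k n : eqm n.+1 (gen_trunc k n) ((\prod_(0 <= s < n.+1) FF n s) * Th k n).
Proof.
rewrite gen_trunc_eq; apply: eqmM => //.
rewrite big_add1 /= big_nat_recl // {2}/FF /= mul1r.
apply: eqm_prod => i _; rewrite Ep_eq /FF /= -[X in eqm _ _ X]addr0.
apply: eqmD => //; apply: eqm_X0; by rewrite leq_pmull.
Qed.

Definition CC k' n i : {poly int} := \prod_(0 <= r < k') Es n (i * k'.+1 + r.+1).

Lemma step2 k' n : eqm n.+1 (\prod_(0 <= s < n.+1) FF n s)
  ((\prod_(0 <= i < n.+1) ue k'.+1 n i) * \prod_(0 <= i < n.+1) CC k' n i).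
Proof.
apply: eqm_trans (trunc_prod (B := (k'.+1 * n.+1)%N) _ _) _.
- by rewrite leq_pmull.
- move=> i /andP[hi _]; rewrite /FF; case: ifP => _ //; exact: Es_big.
rewrite block_prod -big_split /=; apply: eqm_prod => i _.
rewrite inner_split.
have -> : FF n (i * k'.+1) = ue k'.+1 n i by rewrite /FF /ue muln_gt0 andbT.
have -> : \prod_(0 <= r < k') FF n (i * k'.+1 + r.+1) = CC k' n i.
  by apply: eq_bigr => r _; rewrite /FF addnS.
by [].
Qed.

Lemma step3 k' n : eqm n.+1 (\prod_(0 <= s < n.+1) ab k'.+1 n s)
  ((\prod_(0 <= i < n.+1) uo k'.+1 n i) * \prod_(0 <= i < n.+1) CC k' n i).
Proof.
apply: eqm_trans (trunc_prod (B := (k'.+1 * n.+1)%N) _ _) _.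
- by rewrite leq_pmull.
- move=> i /andP[hi _]; rewrite /ab.
  by do 2 case: ifP => _; rewrite ?mulr1 ?mul1r //; try apply: eqm_mul1; apply: Es_big.
rewrite block_prod -big_split /=; apply: eqm_prod => i _.
rewrite inner_split ab_mult //.
have -> : \prod_(0 <= r < k') ab k'.+1 n (i * k'.+1 + r.+1) = CC k' n i.
  apply: eq_big_nat => r /andP[_ hr]; apply: ab_nonmult.
  by rewrite modnMDl modn_small.
by [].
Qed.

Lemma MC k n : (0 < k)%N -> eqm n.+1 (gen_trunc k n) (\prod_(0 <= s < n.+1) ab k n s).
Proof.
move=> kpos; have [k' ek] : exists k', k = k'.+1 by exists k.-1; rewrite prednK.
subst k.
apply: eqm_trans (@step1 k'.+1 n) _.
apply: eqm_trans (eqmM (@step2 k' n) (@eqm_refl _ (Th k'.+1 n))) _.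
apply: eqm_sym; apply: eqm_trans (@step3 k' n) _; apply: eqm_sym.
rewrite mulrAC; apply: eqmM => //; exact: Core.
Qed.

Unset Implicit Arguments.
Theorem theorem1 (k n : nat) : (0 < k)%N ->
  g k n = (num_col_overpartitions k n)%:Z.
Proof.
move=> kpos; rewrite count_prod /g; exact: (MC kpos (ltnSn n)).
Qed.
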